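(* For any positive constants $C_1,C_2,C_3$ there exist positive constants $\gamma,\delta,N_0$ such that the following holds for all $n>N_0$. Let $\rho$ be a positive function on $\mathbb N$ with $\rho(n)>n^{-1}$, and let $\varphi_n$ be a positive function on $\mathbb N$ with $$\sum_{k=1}^n\varphi_n(k)<C_1\,n\rho(n).$$ Let $(\Omega,\mathcal F,\mathbb P)$ be a probability space and $V_1,\dots,V_n$ events such that \begin{enumerate} \item $C_2^{-1}\rho(n)\leq\mathbb P(V_l)<C_2\rho(n)$ for all $l=1,\dots,n$; \item $\mathbb P(V_k\cap V_j)<C_3\,\rho(n)\,\varphi_n(|k-j|)$ for all $k\neq j$. \end{enumerate} Then $$\mathbb P\left(\left\{\sum_{l=1}^n\mathbb I_{V_l}>\gamma\,n\rho(n)\right\}\right)>\delta.$$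
   Context: $\mathbb I_V$ denotes the indicator function of the event $V$. *)

(* Defs.v *)
From HB Require Import structures.
From mathcomp Require Import all_boot all_order all_algebra.
From mathcomp Require Import all_classical all_reals all_analysis.
Set Implicit Arguments. Unset Strict Implicit. Unset Printing Implicit Defensive.

(* Main.v *)
Require Import Defs.
From HB Require Import structures.
From mathcomp Require Import all_boot all_order all_algebra.
From mathcomp Require Import all_classical all_reals all_analysis.
From mathcomp Require Import zify ring lra.
Import Order.TTheory GRing.Theory Num.Theory.
Local Open Scope classical_set_scope.
Local Open Scope ring_scope.

Lemma widen_sum (R : realType) (phi : nat -> R) a b :
  (forall m, 0 <= phi m) -> (a <= b)%N ->
  \sum_(1 <= m < a) phi m <= \sum_(1 <= m < b) phi m.
Proof.
move=> ph ab; case: (leqP a 1) => a1.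
  by rewrite big_geq // sumr_ge0.
rewrite [X in _ <= X](big_cat_nat _ (n:=a)) //=; last exact: ltnW.
by rewrite lerDl sumr_ge0.
Qed.

Lemma sum_left (R : realType) (phi : nat -> R) n k :
  (forall m, 0 <= phi m) -> (k <= n.+1)%N ->
  \sum_(1 <= j < k) phi (k - j)%N <= \sum_(1 <= m < n.+1) phi m.
Proof.
move=> ph kn; rewrite big_nat_rev /=.
rewrite (eq_big_nat _ _ (F2 := phi)); first exact: widen_sum.
move=> i /andP[i1 ik]; congr phi; lia.
Qed.

Lemma sum_right (R : realType) (phi : nat -> R) n k :
  (forall m, 0 <= phi m) ->
  \sum_(k.+1 <= j < n.+1) phi (j - k)%N <= \sum_(1 <= m < n.+1) phi m.
Proof.
move=> ph; rewrite -(add1n k) big_addn.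
rewrite (eq_big_nat _ _ (F2 := phi)); first by apply: widen_sum => //; lia.
move=> i /andP[i1 ik]; congr phi; lia.
Qed.

Lemma row_bound (R : realType) (f : nat -> nat -> R) (phi : nat -> R) n k (c2 c3 : R) :
  (forall m, 0 <= phi m) -> 0 <= c3 -> (1 <= k <= n)%N -> f k k <= c2 ->
  (forall j, (1 <= j <= n)%N -> k <> j -> f k j <= c3 * phi `|(k%:Z - j%:Z)|%N) ->
  \sum_(1 <= j < n.+1) f k j <= c2 + 2 * c3 * \sum_(1 <= m < n.+1) phi m.
Proof.
move=> ph c30 /andP[k1 kn] fkk hf.
rewrite [X in X <= _](big_cat_nat _ (n:=k)) //=; last by lia.
rewrite [X in _ + X <= _]big_ltn; last by lia.
have L : \sum_(1 <= j < k) f k j <= c3 * \sum_(1 <= m < n.+1) phi m.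
  apply: le_trans (_ : \sum_(1 <= j < k) c3 * phi (k - j)%N <= _).
    apply: ler_sum_nat => j /andP[j1 jk].
    rewrite -(distnEl (ltnW jk)); apply: hf; lia.
  by rewrite -mulr_sumr ler_wpM2l // sum_left //; lia.
have Rr : \sum_(k.+1 <= j < n.+1) f k j <= c3 * \sum_(1 <= m < n.+1) phi m.
  apply: le_trans (_ : \sum_(k.+1 <= j < n.+1) c3 * phi (j - k)%N <= _).
    apply: ler_sum_nat => j /andP[j1 jk].
    rewrite -(distnEr (ltnW j1)); apply: hf; lia.
  by rewrite -mulr_sumr ler_wpM2l // sum_right.
have -> : c2 + 2 * c3 * \sum_(1 <= m < n.+1) phi m =
  c3 * \sum_(1 <= m < n.+1) phi m + (c2 + c3 * \sum_(1 <= m < n.+1) phi m) by ring.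
by rewrite lerD // lerD.
Qed.

Lemma final_ineq (R : realType) (g K c a S1 S2 p : R) : 0 < g -> 0 < K -> 0 < c -> 0 <= p ->
  a = g * c -> 2 * a <= S1 -> S2 <= K * c ^+ 2 ->
  S1 <= a + (g / (K * c)) / 2 * S2 + (2 * (g / (K * c)))^-1 * p ->
  g ^+ 2 / (2 * K) < p.
Proof.
move=> g0 K0 c0 p0 ha h1 h2 h3; subst a.
have e1 : (g / (K * c)) / 2 * S2 <= g * c / 2.
  apply: le_trans (_ : (g / (K * c)) / 2 * (K * c ^+ 2) <= _).
    by rewrite ler_wpM2l // divr_ge0 // divr_ge0 // ltW // mulr_gt0.
  by rewrite le_eqVlt; apply/orP; left; apply/eqP; field; rewrite ?gt_eqF.
have e2 : (2 * (g / (K * c)))^-1 * p = p * K * c / (2 * g).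
  by field; rewrite ?gt_eqF.
have h4 : g * c / 2 <= p * K * c / (2 * g).
  by rewrite -e2; lra.
have e3 : p - g ^+ 2 / K = (2 * g / (K * c)) * (p * K * c / (2 * g) - g * c / 2).
  by field; rewrite ?gt_eqF.
have h5 : g ^+ 2 / K <= p.
  rewrite -subr_ge0 e3 mulr_ge0 // ?subr_ge0 //.
  by rewrite divr_ge0 // ?mulr_ge0 // ltW // mulr_gt0.
apply: lt_le_trans h5.
rewrite ltr_pM2l ?exprn_gt0 // ltf_pV2 ?posrE ?mulr_gt0 //.
by rewrite ltr_pMl // ltr1n.
Qed.

Lemma prE (R : realType) d (T : measurableType d) (P : probability T R) A :
  measurable A -> P A = (fine (P A))%:E.
Proof.
move=> mA; rewrite fineK // ge0_fin_numE //.
exact: le_lt_trans (probability_le1 P mA) (ltey _).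
Qed.

Lemma key (R : realType) d (T : measurableType d) (P : probability T R)
  (V : nat -> set T) n (a t : R) :
  (forall l, measurable (V l)) -> 0 < t -> 0 <= a ->
  \sum_(1<=l<n.+1) fine (P (V l)) <= a + t/2 * \sum_(1<=k<n.+1) \sum_(1<=j<n.+1) fine (P (V k `&` V j))
    + (2*t)^-1 * fine (P [set w | a < \sum_(1<=l<n.+1) \1_(V l) w]).
Proof.
move=> mV t0 a0.
pose S := fun w => \sum_(1<=l<n.+1) (\1_(V l) w : R).
pose A := [set w | a < S w].
have mS : measurable_fun setT S.
  by apply: measurable_sum => l; exact: measurable_realfun.measurable_indic.
have mA : measurable A.
  have := mS measurableT _ (measurable_itv `]a, +oo[); rewrite setTI.
  congr measurable; apply/seteqP; split => w /=; rewrite in_itv /= andbT //.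
pose Q := fun w => \sum_(1<=k<n.+1) \sum_(1<=j<n.+1) (\1_(V k `&` V j) w : R).
have QS w : Q w = S w ^+ 2.
  rewrite /Q /S expr2 big_distrlr /=; apply: eq_bigr => k _; apply: eq_bigr => j _.
  by rewrite indicI.
have S0 w : 0 <= S w by apply: sumr_ge0 => l _; rewrite indicE; case: (_ \in _).
have pw w : S w <= a + t/2 * Q w + (2*t)^-1 * \1_A w.
  rewrite QS indicE; case: (boolP (w \in A)) => [/set_mem wA|wA].
    rewrite mulr1; have h : S w <= t/2 * S w ^+ 2 + (2*t)^-1.
      have e : t/2 * S w ^+ 2 + (2*t)^-1 - S w = (t * S w - 1)^+2 / (2 * t).
        by field; rewrite gt_eqF.
      by rewrite -subr_ge0 e divr_ge0 // ?sqr_ge0 // mulr_ge0 // ltW.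
    by apply: (le_trans h); rewrite -addrA lerDr.
  have Sa : S w <= a by rewrite leNgt; apply: contra wA => h; apply/mem_set.
  rewrite mulr0 addr0; apply: (le_trans Sa); rewrite lerDl mulr_ge0 ?sqr_ge0 //.
  by rewrite divr_ge0 // ltW.
have mQ : measurable_fun setT Q.
  apply: measurable_sum => k; apply: measurable_sum => j.
  by apply: measurable_realfun.measurable_indic; apply: measurableI.
have LHS : (\sum_(1<=l<n.+1) fine (P (V l)))%:E = (\int[P]_x (S x)%:E)%E.
  rewrite -sumEFin /S.
  under [RHS]eq_integral do rewrite -sumEFin.
  rewrite ge0_integral_sum //; last first.
    by move=> l; apply/measurable_realfun.measurable_EFinP; exact: measurable_realfun.measurable_indic.
  apply: eq_bigr => l _; rewrite integral_indic // setIT -prE //.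
have IQ : (\sum_(1<=k<n.+1) \sum_(1<=j<n.+1) fine (P (V k `&` V j)))%:E = (\int[P]_x (Q x)%:E)%E.
  rewrite -sumEFin /Q.
  under [RHS]eq_integral do rewrite -sumEFin.
  rewrite ge0_integral_sum //; last first.
    by move=> l x _; rewrite lee_fin; apply: sumr_ge0 => j _; rewrite indicE; case: (_ \in _).
    move=> k; apply/measurable_realfun.measurable_EFinP; apply: measurable_sum => j.
    by apply: measurable_realfun.measurable_indic; apply: measurableI.
  apply: eq_bigr => k _; rewrite -sumEFin.
  under [RHS]eq_integral do rewrite -sumEFin.
  rewrite ge0_integral_sum //; last first.
    by move=> j; apply/measurable_realfun.measurable_EFinP; apply: measurable_realfun.measurable_indic; apply: measurableI.
  apply: eq_bigr => j _; rewrite integral_indic // ?setIT -?prE //; exact: measurableI.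
rewrite -lee_fin LHS.
have t20 : 0 <= t / 2 by rewrite divr_ge0 // ltW.
have c0 : 0 <= (2 * t)^-1 by rewrite invr_ge0 mulr_ge0 // ltW.
have Q0 w : 0 <= Q w by rewrite QS sqr_ge0.
have I0 w : 0 <= (\1_A w : R) by rewrite indicE; case: (_ \in _).
have mI : measurable_fun setT (\1_A : T -> R) by exact: measurable_realfun.measurable_indic.
apply: le_trans.
  apply: (@ge0_le_integral _ _ _ P setT measurableT _ (fun x => ((a + t/2 * Q x) + (2 * t)^-1 * \1_A x)%:E)).
  - by move=> x _; rewrite lee_fin.
  - by apply/measurable_realfun.measurable_EFinP.
  - apply/measurable_realfun.measurable_EFinP; apply: measurable_realfun.measurable_funD.
      apply: measurable_realfun.measurable_funD => //; exact: measurable_realfun.measurable_funM.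
    exact: measurable_realfun.measurable_funM.
  - by move=> x _; rewrite lee_fin.
rewrite le_eqVlt; apply/orP; left; apply/eqP.
have mQ' : measurable_fun setT (fun x => (t/2 * Q x)%R) by exact: measurable_realfun.measurable_funM.
have mI' : measurable_fun setT (fun x => ((2*t)^-1 * \1_A x)%R) by exact: measurable_realfun.measurable_funM.
rewrite (@ge0_integralD _ _ _ P setT measurableT (fun x => (a + t/2*Q x)%:E) (fun x => ((2*t)^-1 * \1_A x)%:E)); first last.
- exact/measurable_realfun.measurable_EFinP.
- by move=> x _; rewrite lee_fin mulr_ge0.
- apply/measurable_realfun.measurable_EFinP; apply: measurable_realfun.measurable_funD => //.
- by move=> x _; rewrite lee_fin addr_ge0 // mulr_ge0.
rewrite (@ge0_integralD _ _ _ P setT measurableT (fun x => a%:E) (fun x => (t/2 * Q x)%:E)); first last.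
- exact/measurable_realfun.measurable_EFinP.
- by move=> x _; rewrite lee_fin mulr_ge0.
- exact: measurable_cst.
- by move=> x _; rewrite lee_fin.
rewrite (@ge0_integralZl_EFin _ _ _ P setT measurableT (fun x => (Q x)%:E) _ _ (t/2)) //.
rewrite (@ge0_integralZl_EFin _ _ _ P setT measurableT (fun x => (\1_A x)%:E) _ _ ((2*t)^-1)) //.
rewrite integral_indic // setIT -IQ (integral_cst P measurableT a%:E).
rewrite [X in (a%:E * X)%E](_ : _ = 1%E); last exact: probability_setT.
rewrite mule1 !EFinD !EFinM; congr (_ + _); apply: congr1; exact: (@prE _ _ _ P A mA).
- exact/measurable_realfun.measurable_EFinP.
- by move=> x _; rewrite lee_fin.
- exact/measurable_realfun.measurable_EFinP.
Qed.

Lemma measA (R : realType) d (T : measurableType d) (V : nat -> set T) n (a : R) :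
  (forall l, measurable (V l)) ->
  measurable [set w | a < \sum_(1<=l<n.+1) (\1_(V l) w : R)].
Proof.
move=> mV.
pose S := fun w => \sum_(1<=l<n.+1) (\1_(V l) w : R).
have mS : measurable_fun setT S.
  by apply: measurable_sum => l; exact: measurable_realfun.measurable_indic.
have := mS measurableT _ (measurable_itv `]a, +oo[); rewrite setTI.
congr measurable; apply/seteqP; split => w /=; rewrite in_itv /= andbT //.
Qed.

Theorem lemma5p6 (R : realType) (C1 C2 C3 : R) :
  0 < C1 -> 0 < C2 -> 0 < C3 ->
  exists gamma delta N0 : R, [/\ 0 < gamma, 0 < delta, 0 < N0 &
    forall n : nat, N0 < n%:R ->
    forall (rho : nat -> R), (forall m, 0 < rho m) -> (n%:R)^-1 < rho n ->
    forall (phi : nat -> R), (forall k, 0 < phi k) ->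
      \sum_(1 <= k < n.+1) phi k < C1 * n%:R * rho n ->
    forall (d : measure_display) (T : measurableType d)
           (P : probability T R) (V : nat -> set T),
      (forall l, measurable (V l)) ->
      (forall l, (1 <= l <= n)%N ->
         ((C2^-1 * rho n)%:E <= P (V l))%E /\ (P (V l) < (C2 * rho n)%:E)%E) ->
      (forall k j, (1 <= k <= n)%N -> (1 <= j <= n)%N -> k <> j ->
         (P (V k `&` V j) < (C3 * rho n * phi `|(k%:Z - j%:Z)|%N)%:E)%E) ->
      (delta%:E < P [set w | (gamma * n%:R * rho n <
                               \sum_(1 <= l < n.+1) \1_(V l) w)%R])%E].
Proof.
move=> C1p C2p C3p.
pose g := (2 * C2)^-1. pose K := C2 + 2 * C1 * C3.
have g0 : 0 < g by rewrite invr_gt0 mulr_gt0.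
have K0 : 0 < K by rewrite addr_gt0 // !mulr_gt0.
exists g, (g ^+ 2 / (2 * K)), 1; split => //.
  by rewrite divr_gt0 ?exprn_gt0 ?mulr_gt0.
move=> n n1 rho rho0 hr phi phi0 hphi d T P V mV h1 h2.
have N0 : 0 < (n%:R : R) by apply: lt_trans n1.
have r0 := rho0 n.
have c1 : 1 < n%:R * rho n.
  by have := hr; rewrite -(ltr_pM2l N0) mulfV ?gt_eqF.
have c0 : 0 < n%:R * rho n by apply: lt_trans c1.
have mA := @measA _ _ _ V n (g * n%:R * rho n) mV.
rewrite (@prE _ _ _ P _ mA) lte_fin.
pose t := g / (K * (n%:R * rho n)).
have t0 : 0 < t by rewrite divr_gt0 // mulr_gt0.
have a0 : 0 <= g * n%:R * rho n by rewrite !mulr_ge0 // ltW.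
have hk := @key _ _ _ P V n _ _ mV t0 a0.
rewrite /t in hk.
have ph0 : forall m, 0 <= phi m by move=> m; apply: ltW.
apply: (@final_ineq R g K (n%:R * rho n) (g * n%:R * rho n) _ _ _ g0 K0 c0); last exact: hk.
- by apply: fine_ge0; apply: measure_ge0.
- by rewrite mulrA.
- apply: le_trans (_ : \sum_(1 <= l < n.+1) C2^-1 * rho n <= _).
    rewrite sumr_const_nat subn1 /= -mulr_natr /g.
    by rewrite le_eqVlt; apply/orP; left; apply/eqP; field; rewrite gt_eqF.
  apply: ler_sum_nat => l hl.
  by have [+ _] := h1 l hl; rewrite (@prE _ _ _ P _ (mV l)) lee_fin.
- apply: le_trans (_ : \sum_(1 <= k < n.+1) (C2 * rho n + 2 * (C3 * rho n) * \sum_(1 <= m < n.+1) phi m) <= _).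
    apply: ler_sum_nat => k hk'.
    apply: (@row_bound _ (fun k j => fine (P (V k `&` V j))) phi) => //.
    + by rewrite mulr_ge0 // ltW.
    + rewrite setIid; have [_ +] := h1 k hk'.
      by rewrite (@prE _ _ _ P _ (mV k)) lte_fin => /ltW.
    + move=> j hj kj; have := h2 k j hk' hj kj.
      by rewrite (@prE _ _ _ P _ (measurableI _ _ (mV k) (mV j))) lte_fin => /ltW.
  rewrite sumr_const_nat subn1 /= -[_ *+ n]mulr_natr.
  set Phi := \sum_(1 <= m < n.+1) phi m.
  set N := (n%:R : R). set r := rho n.
  have e : K * (N * r) ^+ 2 - (C2 * r + 2 * (C3 * r) * Phi) * N =
     C2 * (N * r) * (N * r - 1) + 2 * C3 * r * N * (C1 * N * r - Phi).
    by rewrite /K; ring.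
  rewrite -subr_ge0 e addr_ge0 // mulr_ge0 //.
  + by rewrite mulr_ge0 // ltW.
  + by rewrite subr_ge0 ltW.
  + by rewrite !mulr_ge0 // ltW.
  + by rewrite subr_ge0 ltW.
Qed.
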